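(* Let $(M,\varphi,\xi,\eta,g)$ be a $3$-dimensional $f$-Kenmotsu manifold and let $\gamma(s)$ be a non-geodesic, arc-length parametrized proper triharmonic Frenet curve in $M$ with Frenet frame $\{T,N,B\}$, constant curvature $k_1$ and nonzero torsion $k_2$. Then $\gamma$ is a Frenet helix (i.e. $k_2$ is also constant). Further, with $A:=\frac r2+2(f^2+f')$ and $\Lambda:=\frac r2+3(f^2+f')$, $k_1$ and $k_2$ satisfy \begin{align*} &(k_1^2+k_2^2)^2=(2k_1^2+k_2^2)\big(A-\Lambda(\eta(T)^2+\eta(N)^2)\big)+k_1k_2\,\eta(T)\eta(B)\,\Lambda,\\ &\big(k_1k_2\eta(T)+(2k_1^2+k_2^2)\eta(B)\big)\Lambda\,\eta(N)=0. \end{align*}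
   Context: An almost contact metric manifold $(M^{2n+1},\varphi,\xi,\eta,g)$ has $\varphi^2=-I+\eta\otimes\xi$, $\eta(\xi)=1$, $\varphi\xi=0$, $\eta\circ\varphi=0$, $\eta(X)=g(X,\xi)$, $g(\varphi X,\varphi Y)=g(X,Y)-\eta(X)\eta(Y)$. It is $f$-Kenmotsu if $(\nabla_X\varphi)Y=f(g(\varphi X,Y)\xi-\eta(Y)\varphi X)$ and $\nabla_X\xi=f(X-\eta(X)\xi)$ for smooth $f$ with $df\wedge\eta=0$. In dimension 3 the curvature is $R(X,Y)Z=(\frac r2+2(f^2+f'))(g(Y,Z)X-g(X,Z)Y)-(\frac r2+3(f^2+f'))(g(Y,Z)\eta(X)\xi-g(X,Z)\eta(Y)\xi-\eta(X)\eta(Z)Y+\eta(Y)\eta(Z)X)$, with $r$ the scalar curvature and $f'$ the derivative of $f$ (regarded along the curve as functions of $s$). Frenet equations: $\nabla_TT=k_1N$, $\nabla_TN=-k_1T+k_2B$, $\nabla_TB=-k_2N$. A curve is triharmonic if $\tau_3(\gamma)=\nabla_T^5T+R(\nabla_T^3T,T)T-R(\nabla_T^2T,\nabla_TT)T=0$, and proper triharmonic if triharmonic but not harmonic (not a geodesic). A Frenet helix is a Frenet curve with constant nonzero curvature and torsion. *)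

(* Defs.v *)
From Stdlib Require Import Reals.
From Coquelicot Require Import Coquelicot.
Open Scope R_scope.

(* A vector field along the curve gamma(s), written in coordinates with
   respect to the Frenet frame {T, N, B} (orthonormal, so g is the dot
   product of coordinates). *)
Record fld := mkF { cT : R -> R; cN : R -> R; cB : R -> R }.

Definition Tf : fld := mkF (fun _ => 1) (fun _ => 0) (fun _ => 0).
Definition Nf : fld := mkF (fun _ => 0) (fun _ => 1) (fun _ => 0).
Definition Bf : fld := mkF (fun _ => 0) (fun _ => 0) (fun _ => 1).

Definition fadd (U V : fld) : fld :=
  mkF (fun s => cT U s + cT V s) (fun s => cN U s + cN V s)
      (fun s => cB U s + cB V s).
Definition fopp (U : fld) : fld :=
  mkF (fun s => - cT U s) (fun s => - cN U s) (fun s => - cB U s).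
Definition fscal (c : R -> R) (U : fld) : fld :=
  mkF (fun s => c s * cT U s) (fun s => c s * cN U s) (fun s => c s * cB U s).

Definition gm (U V : fld) (s : R) : R :=
  cT U s * cT V s + cN U s * cN V s + cB U s * cB V s.

(* Covariant derivative nabla_T along the curve, via the Frenet equations
   nabla_T T = k1 N, nabla_T N = -k1 T + k2 B, nabla_T B = -k2 N. *)
Definition covD (k1 : R -> R) (k2 : R -> R) (V : fld) : fld :=
  mkF (fun s => Derive (cT V) s - k1 s * cN V s)
      (fun s => Derive (cN V) s + k1 s * cT V s - k2 s * cB V s)
      (fun s => Derive (cB V) s + k2 s * cN V s).

Fixpoint covDn (k1 k2 : R -> R) (n : nat) (V : fld) : fld :=
  match n with O => V | S m => covD k1 k2 (covDn k1 k2 m V) end.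

Definition eta (xi U : fld) (s : R) : R := gm U xi s.

(* The curvature of a 3-dimensional f-Kenmotsu manifold:
   R(X,Y)Z = A (g(Y,Z)X - g(X,Z)Y)
           - L (g(Y,Z)eta(X)xi - g(X,Z)eta(Y)xi - eta(X)eta(Z)Y + eta(Y)eta(Z)X)
   with A = r/2 + 2(f^2+f'), L = r/2 + 3(f^2+f'). *)
Definition Acoef (r f : R -> R) (s : R) : R :=
  r s / 2 + 2 * (f s ^ 2 + Derive f s).
Definition Lcoef (r f : R -> R) (s : R) : R :=
  r s / 2 + 3 * (f s ^ 2 + Derive f s).

Definition curv (r f : R -> R) (xi X Y Z : fld) : fld :=
  fadd
    (fscal (Acoef r f)
       (fadd (fscal (gm Y Z) X) (fopp (fscal (gm X Z) Y))))
    (fopp (fscal (Lcoef r f)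
       (fadd (fadd (fscal (fun s => gm Y Z s * eta xi X s) xi)
                   (fopp (fscal (fun s => gm X Z s * eta xi Y s) xi)))
             (fadd (fopp (fscal (fun s => eta xi X s * eta xi Z s) Y))
                   (fscal (fun s => eta xi Y s * eta xi Z s) X))))).

Definition tau3 (k1 k2 r f : R -> R) (xi : fld) : fld :=
  fadd (fadd (covDn k1 k2 5 Tf) (curv r f xi (covDn k1 k2 3 Tf) Tf Tf))
       (fopp (curv r f xi (covDn k1 k2 2 Tf) (covDn k1 k2 1 Tf) Tf)).

Definition smooth_on (a b : R) (h : R -> R) : Prop :=
  forall s, a < s < b -> forall n, ex_derive_n h n s.

(* Main.v *)
Require Import Defs.
From Stdlib Require Import Reals Lra.
From Coquelicot Require Import Coquelicot.
Open Scope R_scope.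

Lemma loc_int (a b s : R) : a < s < b -> locally s (fun t => a < t < b).
Proof.
  intros Hs. apply (open_and (fun u => a < u) (fun u => u < b)).
  apply open_gt. apply open_lt. exact Hs.
Qed.

Lemma exd (a b : R) (h : R -> R) s : smooth_on a b h -> a < s < b -> ex_derive h s.
Proof. intros H Hs. exact (H s Hs 1%nat). Qed.

Lemma D_loc (a b : R) (g h : R -> R) s : a < s < b ->
  (forall t, a < t < b -> g t = h t) -> Derive g s = Derive h s.
Proof.
  intros Hs H. apply Derive_ext_loc.
  generalize (loc_int a b s Hs). apply filter_imp. intros t Ht. apply H, Ht.
Qed.
Section S.
Variables (a b k1 : R) (k2 : R -> R).
Hypothesis Hk2 : smooth_on a b k2.
Notation F n := (covDn (fun _ => k1) k2 n Tf).

Lemma h1 s : cT (F 1) s = 0 /\ cN (F 1) s = k1 /\ cB (F 1) s = 0.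
Proof. cbn. rewrite !Derive_const. repeat split; ring. Qed.

Lemma h2 s : cT (F 2) s = - k1^2 /\ cN (F 2) s = 0 /\ cB (F 2) s = k1 * k2 s.
Proof.
  change (cT (F 2) s) with (Derive (cT (F 1)) s - k1 * cN (F 1) s).
  change (cN (F 2) s) with (Derive (cN (F 1)) s + k1 * cT (F 1) s - k2 s * cB (F 1) s).
  change (cB (F 2) s) with (Derive (cB (F 1)) s + k2 s * cN (F 1) s).
  rewrite (Derive_ext _ (fun _ => 0)) by (intro t; apply h1).
  rewrite (Derive_ext (cN (F 1)) (fun _ => k1)) by (intro t; apply h1).
  rewrite (Derive_ext (cB (F 1)) (fun _ => 0)) by (intro t; apply h1).
  rewrite !Derive_const. destruct (h1 s) as [-> [-> ->]]. repeat split; ring.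
Qed.

Lemma h3 s : cT (F 3) s = 0 /\ cN (F 3) s = - k1 * (k1^2 + k2 s^2).
Proof.
  change (cT (F 3) s) with (Derive (cT (F 2)) s - k1 * cN (F 2) s).
  change (cN (F 3) s) with (Derive (cN (F 2)) s + k1 * cT (F 2) s - k2 s * cB (F 2) s).
  rewrite (Derive_ext _ (fun _ => - k1^2)) by (intro t; apply h2).
  rewrite (Derive_ext (cN (F 2)) (fun _ => 0)) by (intro t; apply h2).
  rewrite !Derive_const. destruct (h2 s) as [-> [-> ->]]. split; ring.
Qed.

Lemma h3B s : a < s < b -> cB (F 3) s = k1 * Derive k2 s.
Proof.
  intro Hs.
  change (cB (F 3) s) with (Derive (cB (F 2)) s + k2 s * cN (F 2) s).
  rewrite (Derive_ext _ (fun t => k1 * k2 t)) by (intro t; apply h2).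
  rewrite Derive_scal. destruct (h2 s) as [_ [-> _]]. ring.
Qed.

Lemma h4T s : cT (F 4) s = k1^2 * (k1^2 + k2 s^2).
Proof.
  change (cT (F 4) s) with (Derive (cT (F 3)) s - k1 * cN (F 3) s).
  rewrite (Derive_ext _ (fun _ => 0)) by (intro t; apply h3).
  rewrite Derive_const. destruct (h3 s) as [_ ->]. ring.
Qed.

Lemma dsq s : a < s < b -> Derive (fun t => k2 t ^ 2) s = 2 * k2 s * Derive k2 s.
Proof.
  intro Hs. apply is_derive_unique.
  assert (E := exd _ _ _ s Hk2 Hs).
  auto_derive; auto. change (Derive (fun x => k2 x) s) with (Derive k2 s). ring.
Qed.

Lemma h4N s : a < s < b -> cN (F 4) s = -3 * k1 * k2 s * Derive k2 s.
Proof.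
  intro Hs.
  change (cN (F 4) s) with (Derive (cN (F 3)) s + k1 * cT (F 3) s - k2 s * cB (F 3) s).
  rewrite (Derive_ext _ (fun t => (- k1 * k1^2) + (-k1) * (k2 t ^2))) by (intro t; rewrite (proj2 (h3 t)); ring).
  rewrite Derive_plus. rewrite Derive_const, Derive_scal, dsq by auto.
  rewrite h3B by auto. rewrite (proj1 (h3 s)). ring.
  apply ex_derive_const. apply ex_derive_scal.
  assert (E := exd _ _ _ s Hk2 Hs). auto_derive; auto.
Qed.

Lemma h5T s : a < s < b -> cT (F 5) s = 5 * k1^2 * k2 s * Derive k2 s.
Proof.
  intro Hs.
  change (cT (F 5) s) with (Derive (cT (F 4)) s - k1 * cN (F 4) s).
  rewrite (Derive_ext _ (fun t => k1^4 + k1^2 * (k2 t ^2))) by (intro t; rewrite h4T; ring).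
  rewrite Derive_plus. rewrite Derive_const, Derive_scal, dsq by auto.
  rewrite h4N by auto. ring.
  apply ex_derive_const. apply ex_derive_scal.
  assert (E := exd _ _ _ s Hk2 Hs). auto_derive; auto.
Qed.

Lemma tauT (r f : R -> R) (xi : fld) s : a < s < b ->
  cT (tau3 (fun _ => k1) k2 r f xi) s = 5 * k1^2 * k2 s * Derive k2 s.
Proof.
  intros Hs. unfold tau3, curv, eta, gm.
  cbn [fadd fopp fscal cT cN cB Tf].
  rewrite h5T by auto. rewrite h3B by auto.
  destruct (h1 s) as [-> [-> ->]]. destruct (h2 s) as [-> [-> ->]].
  destruct (h3 s) as [-> ->]. ring.
Qed.

Section C.
Variable c : R.
Hypothesis Hc : forall t, a < t < b -> k2 t = c.

Lemma d0 s : a < s < b -> Derive k2 s = 0.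
Proof. intro Hs. rewrite (D_loc a b k2 (fun _ => c)) by auto. apply Derive_const. Qed.

Lemma h4N' s : a < s < b -> cN (F 4) s = 0.
Proof. intro Hs. rewrite h4N, d0 by auto. ring. Qed.

Lemma h4B s : a < s < b -> cB (F 4) s = - c * k1 * (k1^2 + c^2).
Proof.
  intro Hs.
  change (cB (F 4) s) with (Derive (cB (F 3)) s + k2 s * cN (F 3) s).
  rewrite (D_loc a b _ (fun _ => 0)) by (auto; intros t Ht; rewrite h3B, d0 by auto; ring).
  rewrite Derive_const, (proj2 (h3 s)), Hc by auto. ring.
Qed.

Lemma h5 s : a < s < b -> cN (F 5) s = k1 * (k1^2 + c^2)^2 /\ cB (F 5) s = 0.
Proof.
  intro Hs.
  change (cN (F 5) s) with (Derive (cN (F 4)) s + k1 * cT (F 4) s - k2 s * cB (F 4) s).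
  change (cB (F 5) s) with (Derive (cB (F 4)) s + k2 s * cN (F 4) s).
  rewrite (D_loc a b (cN (F 4)) (fun _ => 0)) by (auto; intros t Ht; apply h4N'; auto).
  rewrite (D_loc a b (cB (F 4)) (fun _ => - c * k1 * (k1^2 + c^2))) by (auto; intros t Ht; apply h4B; auto).
  rewrite !Derive_const, h4T, h4B, h4N', Hc by auto. split; ring.
Qed.

Lemma tauNB (r f : R -> R) (xi : fld) s : a < s < b ->
  let A := Acoef r f s in
  let L := Lcoef r f s in
  let eT := eta xi Tf s in
  let eN := eta xi Nf s in
  let eB := eta xi Bf s in
  cN (tau3 (fun _ => k1) k2 r f xi) s =
    k1 * ((k1 ^ 2 + c ^ 2) ^ 2
       - ((2 * k1 ^ 2 + c ^ 2) * (A - L * (eT ^ 2 + eN ^ 2))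
         + k1 * c * eT * eB * L)) /\
  cB (tau3 (fun _ => k1) k2 r f xi) s =
    k1 * ((k1 * c * eT + (2 * k1 ^ 2 + c ^ 2) * eB) * L * eN).
Proof.
  intros Hs. unfold tau3, curv, eta, gm.
  cbn [fadd fopp fscal cT cN cB Tf Nf Bf].
  destruct (h5 s Hs) as [-> ->]. rewrite h3B, d0 by auto.
  destruct (h1 s) as [-> [-> ->]]. destruct (h2 s) as [-> [-> ->]].
  destruct (h3 s) as [-> ->]. rewrite Hc by auto. split; ring.
Qed.
End C.
End S.

Theorem theorem2
  (a b : R) (k1 : R) (k2 r f : R -> R) (xi : fld) :
  a < b ->
  (* smoothness of the data along the curve *)
  smooth_on a b k2 -> smooth_on a b r -> smooth_on a b f ->
  smooth_on a b (cT xi) -> smooth_on a b (cN xi) -> smooth_on a b (cB xi) ->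
  (* xi is a unit vector field and nabla_T xi = f (T - eta(T) xi) *)
  (forall s, a < s < b -> gm xi xi s = 1) ->
  (forall s, a < s < b ->
     cT (covD (fun _ => k1) k2 xi) s = f s * (1 - eta xi Tf s * cT xi s) /\
     cN (covD (fun _ => k1) k2 xi) s = f s * (0 - eta xi Tf s * cN xi s) /\
     cB (covD (fun _ => k1) k2 xi) s = f s * (0 - eta xi Tf s * cB xi s)) ->
  (* non-geodesic, constant curvature k1, nonzero torsion *)
  k1 <> 0 ->
  (forall s, a < s < b -> k2 s <> 0) ->
  (* triharmonic: tau_3 = 0 *)
  (forall s, a < s < b ->
     cT (tau3 (fun _ => k1) k2 r f xi) s = 0 /\
     cN (tau3 (fun _ => k1) k2 r f xi) s = 0 /\
     cB (tau3 (fun _ => k1) k2 r f xi) s = 0) ->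
  (forall s t, a < s < b -> a < t < b -> k2 s = k2 t) /\
  (forall s, a < s < b ->
     let A := Acoef r f s in
     let L := Lcoef r f s in
     let eT := eta xi Tf s in
     let eN := eta xi Nf s in
     let eB := eta xi Bf s in
     (k1 ^ 2 + k2 s ^ 2) ^ 2
       = (2 * k1 ^ 2 + k2 s ^ 2) * (A - L * (eT ^ 2 + eN ^ 2))
         + k1 * k2 s * eT * eB * L /\
     (k1 * k2 s * eT + (2 * k1 ^ 2 + k2 s ^ 2) * eB) * L * eN = 0).
Proof.
  intros Hab Hk2 _ _ _ _ _ _ _ Hk1 Hk2nz Htau.
  assert (D0 : forall s, a < s < b -> Derive k2 s = 0).
  { intros s Hs. destruct (Htau s Hs) as [HT _].
    rewrite (tauT a b k1 k2 Hk2) in HT by auto.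
    assert (k2 s * Derive k2 s = 0).
    { apply (Rmult_eq_reg_l (5 * k1^2)). rewrite Rmult_0_r. rewrite <- HT. ring.
      apply Rmult_integral_contrapositive_currified. lra. apply pow_nonzero; auto. }
    destruct (Rmult_integral _ _ H) as [H1|H1]; auto. exfalso; apply (Hk2nz s Hs H1). }
  assert (Hconst : forall s t, a < s < b -> a < t < b -> k2 s = k2 t).
  { assert (W : forall s t, a < s < b -> a < t < b -> s <= t -> k2 s = k2 t).
    { intros s t Hs Ht Hst.
      destruct (MVT_gen k2 s t (Derive k2)) as [c [Hc E]].
      - intros x Hx. rewrite Rmin_left, Rmax_right in Hx by lra.
        apply Derive_correct. apply (exd a b); auto; lra.
      - intros x Hx. rewrite Rmin_left, Rmax_right in Hx by lra.
        apply continuity_pt_filterlim. apply (@ex_derive_continuous R_AbsRing R_NormedModule).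
        apply (exd a b); auto; lra.
      - rewrite Rmin_left, Rmax_right in Hc by lra.
        rewrite D0 in E by lra. lra. }
    intros s t Hs Ht. destruct (Rle_dec s t). auto. symmetry; apply W; auto; lra. }
  split; auto.
  intros s Hs. set (c := k2 s).
  assert (Hc : forall t, a < t < b -> k2 t = c) by (intros; apply Hconst; auto).
  destruct (tauNB a b k1 k2 Hk2 c Hc r f xi s Hs) as [EN EB].
  destruct (Htau s Hs) as [_ [HN HB]].
  rewrite EN in HN. rewrite EB in HB.
  cbv zeta. split.
  - apply Rmult_integral in HN. destruct HN as [HN|HN]. contradiction. lra.
  - apply Rmult_integral in HB. destruct HB as [HB|HB]. contradiction. lra.
Qed.
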